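(* There exists a $[7,3]_2$ MWS code, and there exists a $[32,3]_3$ MWS code.
   Context: An $[n,k]_q$ code is a $k$-dimensional subspace of $\mathbb{F}_q^n$, non-degenerate (no coordinate identically zero on the code). It is a maximum weight spectrum (MWS) code if the set of its non-zero Hamming weights has cardinality $\frac{q^k-1}{q-1}$ (so $7$ for $q=2,k=3$ and $13$ for $q=3,k=3$). *)

(* Defs.v *)
From mathcomp Require Import all_boot all_algebra all_field.
Set Implicit Arguments. Unset Strict Implicit. Unset Printing Implicit Defensive.
Import GRing.Theory.
Local Open Scope ring_scope.

(* Linear codes over a finite field F, of length n and dimension k,
   represented by a k x n generator matrix G; the code is the row space of G. *)
Section Codes.
Variable F : finFieldType.

Definition hwt n (c : 'rV[F]_n) : nat := #|[set i | c 0 i != 0]|.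

Definition codewords k n (G : 'M[F]_(k, n)) : {set 'rV[F]_n} :=
  [set c : 'rV[F]_n | (c <= G)%MS].

Definition has_dim k n (G : 'M[F]_(k, n)) : Prop := \rank G = k.

Definition nondegenerate k n (G : 'M[F]_(k, n)) : Prop :=
  forall i : 'I_n, exists2 c : 'rV[F]_n, c \in codewords G & c 0 i != 0.

Definition weight_set k n (G : 'M[F]_(k, n)) : {set 'I_n.+1} :=
  [set (inord (hwt c) : 'I_n.+1) | c in codewords G :\ 0].

Definition is_MWS_code k n (G : 'M[F]_(k, n)) : Prop :=
  [/\ has_dim G, nondegenerate G &
      #|weight_set G| = ((#|F| ^ k).-1 %/ (#|F|.-1))%N].
End Codes.

(* Main.v *)
Require Import Defs.
From mathcomp Require Import all_boot all_algebra all_field.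
Set Implicit Arguments. Unset Strict Implicit. Unset Printing Implicit Defensive.
Import GRing.Theory.
Local Open Scope ring_scope.

Lemma card_nat n (Q : pred nat) : #|[set i : 'I_n | Q i]| = count Q (iota 0 n).
Proof. by rewrite cardsE cardE /enum_mem -enumT size_filter -val_enum_ord count_map. Qed.

Section Gen.
Variable F : finFieldType.
Variable n : nat.
Variable g : nat -> nat -> F.
Definition Gm : 'M[F]_(3, n) := \matrix_(j < 3, i < n) g j i.
Definition W (x y z : F) : nat :=
  count (fun i => x * g 0 i + y * g 1 i + z * g 2 i != 0) (iota 0 n).

Lemma mulGE (a : 'rV[F]_3) (i : 'I_n) :
  (a *m Gm) 0 i = a 0 0 * g 0 i + a 0 1 * g 1 i + a 0 2 * g 2 i.
Proof.
rewrite !mxE !big_ord_recr big_ord0 /= add0r !mxE /=.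
congr (_ * _ + _ * _ + _ * _); congr (a _ _); exact: val_inj.
Qed.

Lemma hwtE (a : 'rV[F]_3) : hwt (a *m Gm) = W (a 0 0) (a 0 1) (a 0 2).
Proof.
rewrite /hwt /W -card_nat; apply: eq_card => i; rewrite !inE mulGE.
by [].
Qed.

Definition rw (x y z : F) : 'rV[F]_3 := \row_(j < 3) [:: x; y; z]`_j.
Lemma rwE x y z : [/\ rw x y z 0 0 = x, rw x y z 0 1 = y & rw x y z 0 2 = z].
Proof. by rewrite !mxE. Qed.

Lemma hwt_eq0 m (c : 'rV[F]_m) : hwt c = 0%N -> c = 0.
Proof.
move=> h; apply/rowP => i; rewrite mxE.
have /eqP := h; rewrite cards_eq0 => /eqP /setP /(_ i); rewrite !inE.
by move/negbFE/eqP.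
Qed.

Hypothesis gid : forall j i, (j < 3)%N -> (i < 3)%N -> (i < n)%N -> g j i = (j == i)%:R.
Hypothesis n3 : (3 <= n)%N.
Hypothesis nondeg :
  all (fun i => [|| g 0 i != 0, g 1 i != 0 | g 2 i != 0]) (iota 0 n).
Variable L : seq nat.
Hypothesis Wall : forall x y z, W x y z \in 0%N :: L.
Variable T : seq (F * F * F).
Hypothesis WT : map (fun t => W t.1.1 t.1.2 t.2) T = L.
Hypothesis L0 : 0%N \notin L.

Lemma rank3 : has_dim Gm.
Proof.
rewrite /has_dim; suff: row_free Gm by move/eqP.
rewrite -kermx_eq0; apply/eqP.
apply/row_matrixP => r; rewrite row0.
have : row r (kermx Gm) *m Gm = 0 by rewrite -row_mul mulmx_ker row0.
move: (row r (kermx Gm)) => u hu.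
have e : forall i : 'I_n, (u *m Gm) 0 i = 0 by move=> i; rewrite hu mxE.
have n0 : (0 < n)%N by apply: leq_trans n3.
have n1 : (1 < n)%N by apply: leq_trans n3.
have e0 := e (Ordinal n0).
have e1 := e (Ordinal n1).
have e2 := e (Ordinal n3).
rewrite mulGE /= (@gid 0%N 0%N) // (@gid 1%N 0%N) // (@gid 2%N 0%N) // /= mulr1 !mulr0 !addr0 in e0.
rewrite mulGE /= (@gid 0%N 1%N) // (@gid 1%N 1%N) // (@gid 2%N 1%N) // /= mulr1 !mulr0 addr0 add0r in e1.
rewrite mulGE /= (@gid 0%N 2%N) // (@gid 1%N 2%N) // (@gid 2%N 2%N) // /= mulr1 !mulr0 !add0r in e2.
apply/rowP => j; rewrite mxE.
case: j => [[|[|[|j]]] hj] //.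
- by rewrite -e0 (_ : Ordinal hj = 0) //; apply: val_inj.
- by rewrite -e1 (_ : Ordinal hj = 1) //; apply: val_inj.
- by rewrite -e2 (_ : Ordinal hj = 2) //; apply: val_inj.
Qed.

Lemma nondegG : Defs.nondegenerate Gm.
Proof.
move=> i.
have := allP nondeg i; rewrite mem_iota add0n ltn_ord => /(_ isT).
have hc : forall x y z, rw x y z *m Gm \in codewords Gm by move=> *; rewrite inE submxMl.
case/or3P => h.
- exists (rw 1 0 0 *m Gm) => //; rewrite mulGE; have [-> -> ->] := rwE 1 0 0.
  by rewrite mul1r !mul0r !addr0.
- exists (rw 0 1 0 *m Gm) => //; rewrite mulGE; have [-> -> ->] := rwE 0 1 0.
  by rewrite mul1r !mul0r addr0 add0r.
- exists (rw 0 0 1 *m Gm) => //; rewrite mulGE; have [-> -> ->] := rwE 0 0 1.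
  by rewrite mul1r !mul0r !add0r.
Qed.

Lemma weightsE : weight_set Gm = [set w : 'I_n.+1 | val w \in L].
Proof.
apply/setP => w; rewrite inE; apply/imsetP/idP.
- case=> c; rewrite !inE => /andP [cn0 /submxP [a ca]] ->; subst c.
  have hle : (hwt (a *m Gm) < n.+1)%N.
    by rewrite ltnS /hwt; apply: leq_trans (max_card _) _; rewrite card_ord.
  rewrite /= (inordK hle).
  have := Wall (a 0 0) (a 0 1) (a 0 2); rewrite -hwtE inE => /orP [/eqP h|//].
  by move: cn0; rewrite (hwt_eq0 h) eqxx.
- move=> wL; move: (wL); rewrite -WT => /mapP [[[x y] z] _ /= hw].
  have hh : hwt (rw x y z *m Gm) = val w.
    by rewrite hwtE; case: (rwE x y z) => -> -> ->.
  exists (rw x y z *m Gm); last first.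
    by rewrite hh inord_val.
  rewrite !inE submxMl andbT; apply/eqP => c0.

  have h0 : hwt (0 : 'rV[F]_n) = 0%N.
    rewrite /hwt; apply/eqP; rewrite cards_eq0; apply/eqP/setP => i.
    by rewrite !inE mxE eqxx.
  move: hh; rewrite c0 h0 => h.
  by move: wL L0; rewrite -h => ->.
Qed.

Lemma mws_of :
  count (fun k => k \in L) (iota 0 n.+1) = ((#|F| ^ 3).-1 %/ (#|F|.-1))%N ->
  is_MWS_code Gm.
Proof.
move=> hc; split; [exact: rank3 | exact: nondegG |].
by rewrite weightsE (card_nat _ (fun k => k \in L)).
Qed.

End Gen.

Lemma F2cases (P : 'F_2 -> Prop) : P (inZp 0) -> P (inZp 1) -> forall x, P x.
Proof.
move=> h0 h1 [[|[|m]] hm] //.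
- by rewrite (_ : Ordinal hm = inZp 0) //; apply: val_inj.
- by rewrite (_ : Ordinal hm = inZp 1) //; apply: val_inj.
Qed.

Lemma F3cases (P : 'F_3 -> Prop) :
  P (inZp 0) -> P (inZp 1) -> P (inZp 2) -> forall x, P x.
Proof.
move=> h0 h1 h2 [[|[|[|m]]] hm] //.
- by rewrite (_ : Ordinal hm = inZp 0) //; apply: val_inj.
- by rewrite (_ : Ordinal hm = inZp 1) //; apply: val_inj.
- by rewrite (_ : Ordinal hm = inZp 2) //; apply: val_inj.
Qed.

Definition rows2 : seq (seq nat) :=
  [:: [:: 1;0;0;0;0;0;0]; [:: 0;1;0;0;1;1;1]; [:: 0;0;1;1;0;0;0]].
Definition g2 (j i : nat) : 'F_2 := inZp (nth 0 (nth [::] rows2 j) i).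
Definition T2 : seq ('F_2 * 'F_2 * 'F_2) :=
  [:: (inZp 1, inZp 0, inZp 0); (inZp 0, inZp 0, inZp 1); (inZp 1, inZp 0, inZp 1); (inZp 0, inZp 1, inZp 0); (inZp 1, inZp 1, inZp 0); (inZp 0, inZp 1, inZp 1); (inZp 1, inZp 1, inZp 1)].
Definition L2 := map (fun t => W 7 g2 t.1.1 t.1.2 t.2) T2.

Lemma code2 : is_MWS_code (Gm 7 g2).
Proof.
apply: (@mws_of _ _ _ _ _ _ L2 _ T2) => //.
- by move=> [|[|[|j]]] [|[|[|i]]] //= _ _ _; apply: val_inj.
- move=> x y z.
  elim/F2cases: x; elim/F2cases: y; elim/F2cases: z; by vm_compute.
- by rewrite card_Fp //; vm_compute.
Qed.

Definition rows3 : seq (seq nat) :=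
  [:: [:: 1;0;0;0;0;0;0;0;0;1;1;1;1;1;1;1;1;1;1;1;1;1;1;1;1;1;1;1;1;1;1;1]; [:: 0;1;0;0;0;0;0;0;1;0;0;0;0;1;1;1;1;1;1;1;1;1;1;1;1;1;2;2;2;2;2;2]; [:: 0;0;1;1;1;1;1;1;1;1;1;1;1;0;0;0;0;0;0;0;0;0;0;1;1;2;0;1;1;1;2;2]].
Definition g3 (j i : nat) : 'F_3 := inZp (nth 0 (nth [::] rows3 j) i).
Definition T3 : seq ('F_3 * 'F_3 * 'F_3) :=
  [:: (inZp 1, inZp 2, inZp 0); (inZp 1, inZp 2, inZp 2); (inZp 1, inZp 2, inZp 1); (inZp 0, inZp 0, inZp 1); (inZp 1, inZp 1, inZp 0); (inZp 0, inZp 1, inZp 0); (inZp 1, inZp 0, inZp 2); (inZp 1, inZp 0, inZp 0); (inZp 1, inZp 1, inZp 2); (inZp 0, inZp 1, inZp 2); (inZp 0, inZp 1, inZp 1); (inZp 1, inZp 0, inZp 1); (inZp 1, inZp 1, inZp 1)].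
Definition L3 := map (fun t => W 32 g3 t.1.1 t.1.2 t.2) T3.

Lemma code3 : is_MWS_code (Gm 32 g3).
Proof.
apply: (@mws_of _ _ _ _ _ _ L3 _ T3) => //.
- by move=> [|[|[|j]]] [|[|[|i]]] //= _ _ _; apply: val_inj.
- move=> x y z.
  elim/F3cases: x; elim/F3cases: y; elim/F3cases: z; by vm_compute.
- by rewrite card_Fp //; vm_compute.
Qed.

Theorem mainTheorem13 :
  (exists G : 'M['F_2]_(3, 7), is_MWS_code G) /\
  (exists G : 'M['F_3]_(3, 32), is_MWS_code G).
Proof. by split; [exists (Gm 7 g2); exact: code2 | exists (Gm 32 g3); exact: code3]. Qed.
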